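(* Let $(X,T)$ be a topological dynamical system, $f\in C(X,\mathbb{R})$, and $(K_n)_{n\ge1}$ a sequence of nonempty closed subsets of $X$. Then $$\lim_{\delta\to0}\limsup_{n\to+\infty}\frac1n\log P_n(T,f,\delta,K_n)=\sup_{\mathcal{U}\in\mathcal{C}_X^o}\limsup_{n\to+\infty}\frac1n\log P_n(T,f,\mathcal{U},K_n).$$
   Context: A TDS is a compact metric space $(X,d)$ with a homeomorphism $T$. $f_n=\sum_{i=0}^{n-1}f\circ T^i$, $d_n(x,y)=\max_{0\le i<n}d(T^ix,T^iy)$, and $P_n(T,f,\delta,K)=\sup\{\sum_{x\in E}\exp f_n(x): E\subseteq K,\ d_n(x,y)>\delta\text{ for distinct }x,y\in E\}$. $\mathcal{C}_X$ is the set of finite Borel covers of $X$, $\mathcal{C}_X^o$ the set of finite open covers; $\mathcal{V}\succeq\mathcal{U}$ means each element of $\mathcal{V}$ lies in some element of $\mathcal{U}$; $\mathcal{U}_0^{n-1}=\bigvee_{i=0}^{n-1}T^{-i}\mathcal{U}$. $P_n(T,f,\mathcal{U},K)=\inf\{\sum_{V\in\mathcal{V}}\sup_{x\in V\cap K}\exp f_n(x):\mathcal{V}\in\mathcal{C}_X,\ \mathcal{V}\succeq\mathcal{U}_0^{n-1}\}$, terms with $V\cap K=\emptyset$ contributing $0$. *)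

(* Defs.v *)
From HB Require Import structures.
From mathcomp Require Import all_boot all_order all_algebra.
From mathcomp Require Import all_classical all_reals all_analysis.
Set Implicit Arguments. Unset Strict Implicit. Unset Printing Implicit Defensive.
Import Order.TTheory GRing.Theory Num.Theory.
Import numFieldNormedType.Exports.
Local Open Scope classical_set_scope.
Local Open Scope ring_scope.

Section Pressure.
Context {R : realType} {X : metricType R}.

Definition birk (T : X -> X) (f : X -> R) (n : nat) (x : X) : R :=
  \sum_(i < n) f (iter i T x).

Definition bowen_dist (T : X -> X) (n : nat) (x y : X) : R :=
  \big[Order.max/0]_(i < n) mdist (iter i T x) (iter i T y).

Definition separated_set (T : X -> X) (n : nat) (delta : R) (E : set X) :=
  forall x y, E x -> E y -> x <> y -> delta < bowen_dist T n x y.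

Definition pressure_sep (T : X -> X) (f : X -> R) (n : nat) (delta : R)
    (K : set X) : \bar R :=
  ereal_sup [set (\sum_(x \in E) (expR (birk T f n x))%:E)%E
            | E in [set E | finite_set E /\ E `<=` K /\ separated_set T n delta E]].

Definition borel_set (A : set X) : Prop := (<<s [set B | open B] >>) A.

Definition borel_cover (V : set (set X)) : Prop :=
  finite_set V /\ (forall A, V A -> borel_set A) /\ \bigcup_(A in V) A = setT.

Definition open_cover (U : set (set X)) : Prop :=
  finite_set U /\ (forall A, U A -> open A) /\ \bigcup_(A in U) A = setT.

Definition refines (V U : set (set X)) : Prop :=
  forall A, V A -> exists2 B, U B & A `<=` B.

Definition join_cover (T : X -> X) (U : set (set X)) (n : nat) : set (set X) :=
  [set W | exists g : nat -> set X, (forall i, (i < n)%N -> U (g i)) /\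
           W = \bigcap_(i in [set i | (i < n)%N]) (iter i T @^-1` g i)].

Definition cover_term (T : X -> X) (f : X -> R) (n : nat) (K V : set X) : \bar R :=
  if pselect (V `&` K = set0) then 0%E
  else ereal_sup [set (expR (birk T f n x))%:E | x in V `&` K].

Definition pressure_cov (T : X -> X) (f : X -> R) (n : nat) (U : set (set X))
    (K : set X) : \bar R :=
  ereal_inf [set (\sum_(A \in V) cover_term T f n K A)%E
            | V in [set V | borel_cover V /\ refines V (join_cover T U n)]].

End Pressure.

Definition elog {R : realType} (x : \bar R) : \bar R :=
  match x with
  | EFin r => if (0 < r)%R then (ln r)%:E else -oo%E
  | +oo%E => +oo%E
  | -oo%E => -oo%E
  end.

Definition homeomorphism {R : realType} {X : metricType R} (T : X -> X) : Prop :=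
  continuous T /\ exists2 S : X -> X, continuous S & cancel T S /\ cancel S T.

(* Main.v *)
Require Import Defs.
From HB Require Import structures.
From mathcomp Require Import all_boot all_order all_algebra.
From mathcomp Require Import all_classical all_reals all_analysis.
From mathcomp Require Import finmap.
From mathcomp Require Import lra ring.
Import Order.TTheory GRing.Theory Num.Theory.
Import numFieldNormedType.Exports.
Local Open Scope classical_set_scope.
Local Open Scope ring_scope.
Lemma compact_In0' (T : topologicalType) (A : set T) : compact A ->
  forall (I : choiceType) (D : set I) (f : I -> set T),
    (exists i, D i) -> closed_fam_of A D f -> finI D f -> \bigcap_(i in D) f i !=set0.
Proof.
move=> Aco I D f [i Di] [g gcl feAg] finIf.
  have [|p [Ap clfinIfp]] := Aco _ (finI_filter finIf).
    by exists (f i); [apply: finI_from1|rewrite feAg // => ? []].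
  exists p => j Dj; rewrite feAg //; split=> //; apply: gcl => // B.
  by apply: clfinIfp; exists (f j); [apply: finI_from1|rewrite feAg // => ? []].
Qed.

Lemma compact_cover' (T : topologicalType) (A : set T) : compact A -> cover_compact A.
Proof.
move=> Aco; rewrite cover_compactE => I D f [g gop feAg] fcov.
  case: (pselect (exists i, D i)) => [[j Dj] | /asboolP]; last first.
    rewrite asbool_neg => /forallp_asboolPn D0.
    by exists fset0 => // ? /fcov [? /D0].
  apply/exists2P; apply: contrapT.
  move=> /asboolP; rewrite asbool_neg => /forallp_asboolPn sfncov.
  suff [p IAnfp] : \bigcap_(i in D) (A `\` f i) !=set0.
    by have /IAnfp [Ap _] := Dj; have /fcov [k /IAnfp [_]] := Ap.
  apply: (@compact_In0' T A Aco I D (fun i => A `\` f i)); first by exists j.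
    exists (fun i => ~` g i) => i Di; first exact/open_closedC/gop.
    rewrite predeqE => p; split=> [[Ap nfip] | [Ap ngip]]; split=> //.
      by move=> gip; apply: nfip; rewrite feAg.
    by rewrite feAg // => - [].
  move=> D' sD.
  have /asboolP : ~ A `<=` cover [set` D'] f by move=> sAIf; exact: (sfncov D').
  rewrite asbool_neg => /existsp_asboolPn [p /asboolP].
  rewrite asbool_neg => /imply_asboolPn [Ap nUfp].
  by exists p => i D'i; split=> // fip; apply: nUfp; exists i.
Qed.
Section P1.
Context {R : realType} {X : metricType R}.
Implicit Types (x y z : X) (r : R).

Lemma msym x y : mdist x y = mdist y x.
Proof. exact: metric_sym. Qed.

Lemma mtri x y z : mdist x z <= mdist x y + mdist y z.
Proof. exact: metric_triangle. Qed.

Lemma mball_open x r : open [set y | mdist x y < r].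
Proof.
rewrite openE => y /= hy.
have e0 : 0 < r - mdist x y by rewrite subr_gt0.
apply: (@nbhs_ballP _ _ y _).2 ; exists (r - mdist x y) => // w.
rewrite ballEmdist /= => hw.
rewrite (le_lt_trans (mtri x y w))//.
by rewrite -ltrBrDl.
Qed.

Lemma mdist_ge0' x y : 0 <= mdist x y.
Proof. exact: mdist_ge0. Qed.
End P1.
Section P2.
Context {R : realType} {X : metricType R}.
Implicit Types (x y z : X) (r : R).

Lemma compact_leb (e : X -> R) : compact [set: X] -> (forall x, 0 < e x) ->
  exists2 r, 0 < r & forall y, exists z, mdist z y < e z / 2 /\ r <= e z / 2.
Proof.
move=> cX e0.
have := @compact_cover' X _ cX => /(_ X setT (fun z => [set y | mdist z y < e z / 2])).
case.
- by move=> z _; exact: mball_open.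
- move=> y _; exists y => //=; rewrite mdistxx divr_gt0//.
move=> D _ hD.
exists (\big[Order.min/1]_(z <- D) (e z / 2)).
  by elim/big_ind: _ => // [a b a0 b0|z _]; [rewrite lt_min a0 b0|rewrite divr_gt0].
move=> y; have [z zD /= hz] := hD y I.
exists z; split => //.
by apply: ge_bigmin_seq.
Qed.
End P2.
Section P3.
Context {R : realType} {X : metricType R}.
Implicit Types (x y z : X) (r : R).

Lemma lebesgue_num (U : set (set X)) : compact [set: X] ->
  (forall A, U A -> open A) -> \bigcup_(A in U) A = setT ->
  exists2 r, 0 < r & forall x, exists2 A, U A & [set y | mdist x y < r] `<=` A.
Proof.
move=> cX Uop Ucov.
have : forall x, exists e, 0 < e /\ exists2 A, U A & [set y | mdist x y < e] `<=` A.
  move=> x; have : setT x by [].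
  rewrite -Ucov => -[A UA Ax].
  have := Uop A UA; rewrite openE => /(_ x Ax).
  rewrite /interior => /nbhs_ballP [e e0 he].
  exists e; split => //; exists A => // y hy; apply: he.
  by rewrite ballEmdist.
move=> /choice [e he].
have [r r0 hr] := compact_leb (fun x => e x) cX (fun x => (he x).1).
exists r => // x.
have [z [hz1 hz2]] := hr x.
have [_ [A UA hA]] := he z.
exists A => // y /= hy; apply: hA => /=.
rewrite (le_lt_trans (mtri z x y))// [e z]splitr ltrD//.
by rewrite (lt_le_trans hy).
Qed.

Lemma unif_cont (f : X -> R) : compact [set: X] -> continuous f ->
  forall eps, 0 < eps -> exists2 eta, 0 < eta &
    forall a b, mdist a b < eta -> `|f a - f b| < eps.
Proof.
move=> cX fc eps eps0.
have : forall x, exists e, 0 < e /\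
    forall y, mdist x y < e -> `|f x - f y| < eps / 2.
  move=> x; have := fc x => /cvgrPdist_lt /(_ (eps / 2)).
  rewrite divr_gt0// => /(_ isT) /nbhs_ballP [e e0 he].
  exists e; split => // y hy; apply: he; by rewrite ballEmdist.
move=> /choice [e he].
have [r r0 hr] := compact_leb (fun x => e x) cX (fun x => (he x).1).
exists r => // a b hab.
have [z [hz1 hz2]] := hr a.
have ez := (he z).1.
have h1 := (he z).2 a (ltac:(lra)).
have h2 : mdist z b < e z.
  by rewrite (le_lt_trans (mtri z a b))//; lra.
have h2' := (he z).2 b h2.
have -> : f a - f b = (f z - f b) - (f z - f a) by ring.
rewrite (le_lt_trans (ler_normB _ _))//; lra.
Qed.
End P3.
Section P4.
Context {R : realType} {X : metricType R}.
Implicit Types (x y z c w : X) (r : R).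

Definition obb (T : X -> X) n c r :=
  [set w | forall i, (i < n)%N -> mdist (iter i T c) (iter i T w) < r].

Lemma iter_cont (T : X -> X) : continuous T -> forall i, continuous (iter i T).
Proof.
move=> cT; elim => [|i IH] /= x; first exact: cvg_id.
by apply: continuous_comp; [exact: IH|exact: cT].
Qed.

Lemma obb_open (T : X -> X) n c r : continuous T -> open (obb T n c r).
Proof.
move=> cT; elim: n => [|n IH].
  rewrite (_ : obb T 0 c r = setT); first exact: openT.
  by apply/seteqP; split => w //= _ i.
rewrite (_ : obb T n.+1 c r = obb T n c r `&`
   (iter n T @^-1` [set y | mdist (iter n T c) y < r])).
  apply: openI => //; apply: open_comp; last exact: mball_open.
  by move=> w _; apply: iter_cont.
apply/seteqP; split => w /=.
  by move=> h; split; [move=> i hi; apply: h; rewrite ltnS ltnW|apply: h].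
move=> [h1 h2] i; rewrite ltnS leq_eqVlt => /orP[/eqP ->//|]; exact: h1.
Qed.

Lemma obb_join (T : X -> X) (U : set (set X)) n c r :
  (forall x, exists2 A, U A & [set y | mdist x y < r] `<=` A) ->
  exists2 W, join_cover T U n W & obb T n c r `<=` W.
Proof.
move=> hU.
have /choice [g hg] : forall i, exists A, U A /\
    [set y | mdist (iter i T c) y < r] `<=` A.
  by move=> i; have [A UA hA] := hU (iter i T c); exists A.
exists (\bigcap_(i in [set i | (i < n)%N]) (iter i T @^-1` g i)).
  by exists g; split => // i _; exact: (hg i).1.
by move=> w hw i /= hi; apply: (hg i).2; exact: hw.
Qed.

Lemma bowen_lt (T : X -> X) n x y r : 0 < r ->
  (forall i, (i < n)%N -> mdist (iter i T x) (iter i T y) < r) ->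
  bowen_dist T n x y < r.
Proof.
move=> r0 h; rewrite /bowen_dist; elim/big_ind: _ => //.
  by move=> a b ha hb; rewrite /Order.max; case: ifP.
by move=> i _; apply: h.
Qed.

Lemma bowen_ge (T : X -> X) n x y i : (i < n)%N ->
  mdist (iter i T x) (iter i T y) <= bowen_dist T n x y.
Proof.
move=> hi; rewrite /bowen_dist.
exact: (le_bigmax _ (fun j : 'I_n => mdist (iter j T x) (iter j T y)) (Ordinal hi)).
Qed.

Lemma bowen_sym (T : X -> X) n x y : bowen_dist T n x y = bowen_dist T n y x.
Proof. by rewrite /bowen_dist; apply: eq_bigr => i _; rewrite msym. Qed.

Lemma birk_le (T : X -> X) (f : X -> R) n x w g :
  (forall i, (i < n)%N -> f (iter i T w) <= f (iter i T x) + g) ->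
  birk T f n w <= birk T f n x + n%:R * g.
Proof.
move=> h; rewrite /birk.
rewrite (le_trans (ler_sum _ (fun (i : 'I_n) _ => h i (ltn_ord i))))//.
by rewrite big_split /= sumr_const card_ord mulr_natl.
Qed.
End P4.
Section P5.
Context {R : realType} {X : metricType R}.
Implicit Types (x y z c w : X) (r : R).

Lemma ct_ge0 (T : X -> X) (f : X -> R) n K A : (0 <= cover_term T f n K A)%E.
Proof.
rewrite /cover_term; case: pselect => // hne.
have [x Ax] : (A `&` K) !=set0 by apply/set0P/eqP.
apply: le_ereal_sup_tmp; exists (expR (birk T f n x))%:E; first by exists x.
by rewrite lee_fin expR_ge0.
Qed.

Lemma ct_ge (T : X -> X) (f : X -> R) n K A x : A x -> K x ->
  ((expR (birk T f n x))%:E <= cover_term T f n K A)%E.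
Proof.
move=> Ax Kx; rewrite /cover_term; destruct (pselect _) as [he0|hne].
  by exfalso; suff : (set0 : set X) x by []; rewrite -he0.
by apply: ereal_sup_ubound; exists x.
Qed.

Lemma sep_le_cov (T : X -> X) (f : X -> R) n d (U : set (set X)) K : 0 < d ->
  (forall A, U A -> forall x y, A x -> A y -> mdist x y < d) ->
  (pressure_sep T f n d K <= pressure_cov T f n U K)%E.
Proof.
move=> d0 hU.
rewrite /pressure_sep; apply: ge_ereal_sup => _ [E [Efin [EK Esep]] <-].
rewrite /pressure_cov; apply: le_ereal_inf_tmp => _ [V [[Vfin [Vbor Vcov]] Vref] <-].
have /choice [h hh] : forall x, exists A, V A /\ A x.
  move=> x; have : (\bigcup_(A in V) A) x by rewrite Vcov.
  by case=> A VA Ax; exists A.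
have hinj : set_inj E h.
  move=> x y /set_mem Ex /set_mem Ey hxy; apply: contrapT => nxy.
  have := Esep x y Ex Ey nxy; apply/negP; rewrite -leNgt; apply: ltW.
  have [W [g [hg eW]] hW] := Vref _ (hh x).1.
  have Wx : W x by apply: hW; exact: (hh x).2.
  have Wy : W y by apply: hW; rewrite hxy; exact: (hh y).2.
  apply: bowen_lt => // i hi.
  move: Wx Wy; rewrite eW => /(_ i hi) Wx /(_ i hi) Wy.
  exact: (hU _ (hg i hi)).
apply: (@le_trans _ _ (\sum_(x \in E) cover_term T f n K (h x))%E).
  by apply: lee_fsum => // x Ex; apply: ct_ge; [exact: (hh x).2|exact: EK].
rewrite -fsbig_image//.
apply: lee_fsum_nneg_subset => //; first exact: finite_image.
  by move=> A /set_mem -[x Ex <-]; apply/mem_set; exact: (hh x).1.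
by move=> A _; apply: ct_ge0.
Qed.
End P5.
Section P6.
Context {R : realType} {X : metricType R}.
Implicit Types (x y z c w : X) (r : R).

Lemma img_sum_le (h : X -> set X) (F : set X -> \bar R) (s : seq X) :
  (forall A, (0 <= F A)%E) ->
  (\sum_(A \in h @` [set` s]) F A <= \sum_(x <- s) F (h x))%E.
Proof.
move=> F0; elim: s => [|a s IH].
  rewrite big_nil (_ : [set` [::]] = set0) ?image_set0 ?fsbig_set0//.
  by apply/seteqP; split => x.
rewrite big_cons.
have -> : h @` [set` a :: s] = h a |` h @` [set` s].
  apply/seteqP; split => A /=.
    move=> [x]; rewrite inE => /orP[/eqP -> <-|xs <-]; first by left.
    by right; exists x.
  case=> [->|[x xs <-]]; first by exists a => //; rewrite inE eqxx.
  by exists x => //; rewrite inE xs orbT.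
case: (pselect ((h @` [set` s]) (h a))) => [ha|ha].
  rewrite setUidr; last by move=> A ->.
  by rewrite (le_trans IH)// leeDr.
rewrite (fsbigD1 (h a)) /=; last by left.
  rewrite (_ : (h a |` h @` [set` s]) `\ h a = h @` [set` s]); first exact: leeD2l.
  apply/seteqP; split => A /=; first by case=> -[->|//] /(_ erefl).
  by move=> hA; split; [right|move=> eA; apply: ha; rewrite -eA].
by rewrite finite_setU; split; [exact: finite_set1|apply: finite_image; exact: finite_seq].
Qed.

Lemma borelU (A B : set X) : borel_set A -> borel_set B -> borel_set (A `|` B).
Proof.
move=> hA hB; rewrite /borel_set -bigcup2E.
have := @sigma_algebra_bigcup X setT [set B | open B] (bigcup2 A B); apply.
by case=> [|[|i]] //=; exact: sigma_algebra0.
Qed.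

Lemma borelC (A : set X) : borel_set A -> borel_set (~` A).
Proof. by move=> hA; rewrite -setTD; exact: sigma_algebraCD. Qed.

Lemma borel_open (A : set X) : open A -> borel_set A.
Proof. by move=> oA; exact: (@sub_sigma_algebra X setT [set B | open B]). Qed.

Lemma borelI (A B : set X) : borel_set A -> borel_set B -> borel_set (A `&` B).
Proof.
move=> hA hB; rewrite -[A `&` B]setCK setCI; apply: borelC.
by apply: borelU; apply: borelC.
Qed.

Lemma greedy (T : X -> X) n r (s : seq X) : 0 <= r ->
  exists E : seq X, [/\ uniq E, {subset E <= s}, separated_set T n r [set` E] &
    forall y, y \in s -> exists2 x, x \in E &
      forall i, (i < n)%N -> mdist (iter i T x) (iter i T y) <= r].
Proof.
move=> r0; elim: s => [|a s [E [uE sE sepE cE]]].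
  by exists [::]; split => // x y.
case: (pselect (exists2 x, x \in E & bowen_dist T n x a <= r)) => [[x xE hx]|hn].
  exists E; split => //.
    by move=> y /sE ys; rewrite inE ys orbT.
  move=> y; rewrite inE => /orP[/eqP ->|ys]; last exact: cE.
  by exists x => // i hi; rewrite (le_trans (bowen_ge T n x a i hi)).
have aE : a \notin E.
  apply/negP => aE; apply: hn; exists a => //.
  rewrite /bowen_dist; apply: bigmax_le => // i _; by rewrite mdistxx.
have hn' : forall x, x \in E -> r < bowen_dist T n x a.
  by move=> x xE; rewrite ltNge; apply/negP => h; apply: hn; exists x.
exists (a :: E); split => //=.
- by rewrite aE.
- move=> y; rewrite !inE => /orP[->//|/sE ->]; by rewrite orbT.
- move=> x y /=; rewrite !inE => /orP[/eqP ->|xE] /orP[/eqP ->|yE] nxy //.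
  + by rewrite bowen_sym; apply: hn'.
  + by apply: hn'.
  + exact: sepE.
- move=> y; rewrite inE => /orP[/eqP ->|ys].
    by exists a; [rewrite inE eqxx|move=> i _; rewrite mdistxx].
  by have [x xE hx] := cE y ys; exists x => //; rewrite inE xE orbT.
Qed.
End P6.
Section P7.
Context {R : realType} {X : metricType R}.
Implicit Types (x y z c w : X) (r : R).

Lemma cov_le_sep (T : X -> X) (f : X -> R) n (U : set (set X)) r g (K : set X) :
  compact [set: X] -> continuous T -> 0 < r -> 0 <= g ->
  (forall x, exists2 A, U A & [set y | mdist x y < 2 * r] `<=` A) ->
  (forall a b, mdist a b < 2 * r -> f b <= f a + g) ->
  (pressure_cov T f n U K <= (expR (n%:R * g))%:E * pressure_sep T f n r K)%E.
Proof.
move=> cX cT r0 g0 hU hf.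
pose O z := obb T n z (r / 2).
have r20 : 0 < r / 2 by rewrite divr_gt0.
have hcov : setT `<=` cover setT O.
  by move=> z _; exists z => // i _; rewrite /O /obb /= mdistxx.
have [Z _ hZ] := @compact_cover' X _ cX X setT O (fun z _ => obb_open T n z (r/2) cT) hcov.
have /choice [yz hyz] : forall z, exists y, (exists w, O z w /\ K w) -> O z y /\ K y.
  move=> z; case: (pselect (exists w, O z w /\ K w)) => [[w hw]|hn].
    by exists w.
  by exists z.
pose s := [seq yz z | z <- Z & `[< exists w, O z w /\ K w >]].
have sK : forall y, y \in s -> K y.
  move=> y /mapP [z]; rewrite mem_filter => /andP [/asboolP h _] ->.
  exact: (hyz z h).2.
have [E [uE sE sepE cE]] := greedy T n r s (ltW r0).
have key : forall k, K k -> exists2 x, x \in E & obb T n x (2 * r) k.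
  move=> k Kk; have [z zZ Ozk] := hZ k I.
  have hz : exists w, O z w /\ K w by exists k.
  have ys : yz z \in s.
    by apply/mapP; exists z => //; rewrite mem_filter zZ andbT; apply/asboolP.
  have [x xE hx] := cE _ ys.
  exists x => // i hi.
  have h1 := hx i hi.
  have h2 := (hyz z hz).1 i hi.
  have h3 := Ozk i hi.
  have t1 := mtri (iter i T x) (iter i T (yz z)) (iter i T k).
  have t2 := mtri (iter i T (yz z)) (iter i T z) (iter i T k).
  have t3 := msym (iter i T (yz z)) (iter i T z).
  rewrite /= in h2 h3 *; lra.
pose B := \bigcup_(x in [set` E]) obb T n x (2 * r).
pose Vb := (fun x => obb T n x (2 * r)) @` [set` E].
pose Vr := (fun z => O z `&` ~` B) @` [set` Z].
have Vfin : finite_set (Vb `|` Vr).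
  by rewrite finite_setU; split; apply: finite_image; [exact: finite_seq|exact: finite_fset].
have Vbor : forall A, (Vb `|` Vr) A -> borel_set A.
  move=> A [[x _ <-]|[z _ <-]]; first by apply: borel_open; exact: obb_open.
  apply: borelI; first by apply: borel_open; exact: obb_open.
  apply: borelC; apply: borel_open; apply: bigcup_open => x _; exact: obb_open.
have Vcov : \bigcup_(A in Vb `|` Vr) A = setT.
  apply/seteqP; split => // w _.
  have [z zZ Ozw] := hZ w I.
  case: (pselect (B w)) => [[x xE hxw]|nB].
    by exists (obb T n x (2 * r)) => //; left; exists x.
  by exists (O z `&` ~` B) => //; right; exists z.
have Vref : refines (Vb `|` Vr) (join_cover T U n).
  move=> A [[x _ <-]|[z _ <-]]; first exact: obb_join.
  have [W hW sW] := obb_join T U n z (2 * r) hU.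
  exists W => // w [Ow _]; apply: sW => i hi.
  have := Ow i hi; lra.
apply: (@le_trans _ _ (\sum_(A \in Vb `|` Vr) cover_term T f n K A)%E).
  apply: ge_ereal_inf; exists (\sum_(A \in Vb `|` Vr) cover_term T f n K A)%E => //.
  by exists (Vb `|` Vr).
have -> : Vb `|` Vr = Vb `|` (Vr `\` Vb).
  apply/seteqP; split => A; last by case=> [h|[h _]]; [left|right].
  by case=> h; [left|case: (pselect (Vb A)) => h'; [left|right]].
have hsplit : (\sum_(A \in Vb `|` (Vr `\` Vb)) cover_term T f n K A =
   \sum_(A \in Vb) cover_term T f n K A + \sum_(A \in Vr `\` Vb) cover_term T f n K A)%E.
  apply: fsbigU0.
  - by apply: finite_image; exact: finite_seq.
  - apply: (@sub_finite_set _ _ Vr); first by move=> A [h _].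
    by apply: finite_image; exact: finite_fset.
  - by move=> A [h [_ h']].
rewrite hsplit.
have -> : (\sum_(A \in Vr `\` Vb) cover_term T f n K A)%E = 0%E.
  apply: fsbig1 => A [[z _ <-] _].
  rewrite /cover_term; destruct (pselect _) as [h0|hne]; first by []. exfalso; apply: hne.
  apply/seteqP; split => // w [[_ nB] Kw]; apply: nB.
  by have [x xE hx] := key w Kw; exists x.
rewrite adde0.
apply: (le_trans (img_sum_le (fun x => obb T n x (2 * r)) (cover_term T f n K) E (ct_ge0 T f n K))).
apply: (@le_trans _ _ (\sum_(x <- E) ((expR (n%:R * g))%:E * (expR (birk T f n x))%:E))%E).
  apply: lee_sum => x _.
  rewrite /cover_term; destruct (pselect _) as [h1|h1].
    by apply: mule_ge0; rewrite lee_fin expR_ge0.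
  apply: ge_ereal_sup => _ [w [hw Kw] <-].
  rewrite -EFinM lee_fin -expRD ler_expR addrC.
  by apply: birk_le => i hi; apply: hf; exact: hw i hi.
rewrite -ge0_sume_distrr; last by move=> x _; rewrite lee_fin expR_ge0.
apply: lee_wpmul2l; first by rewrite lee_fin expR_ge0.
rewrite fsbig_seq //.
apply: ereal_sup_ubound; exists [set` E] => //; split; [exact: finite_seq|split => //].
by move=> x /= xE; apply: (sK x); exact: sE.
Qed.
End P7.
Section P8.
Context {R : realType}.

Lemma elog_le (x y : \bar R) : (x <= y)%E -> (elog x <= elog y)%E.
Proof.
move: x y => [a| |] [b| |] //= hab; rewrite ?lee_fin in hab.
- have [a0|a0] := ltrP 0 a; last by rewrite leNye.
  have b0 : 0 < b by exact: (lt_le_trans a0 hab).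
  by rewrite b0 lee_fin ler_ln // ?posrE.
- by case: ifP => _; rewrite ?leey ?leNye.
- by rewrite leNye.
Qed.

Lemma elog_mul (c : R) (y : \bar R) :
  elog ((expR c)%:E * y)%E = (c%:E + elog y)%E.
Proof.
case: y => [s| |] /=.
- rewrite -?EFinM /=; case: (ltrP 0 s) => s0.
    rewrite ifT ?mulr_gt0 ?expR_gt0// lnM ?posrE ?expR_gt0// expRK.
    by rewrite EFinD.
  rewrite ifF//; apply/negbTE; rewrite -leNgt.
  by rewrite pmulr_rle0 ?expR_gt0.
- by rewrite gt0_muley ?lte_fin ?expR_gt0.
- by rewrite gt0_muleNy ?lte_fin ?expR_gt0.
Qed.

Lemma scale_shift (n : nat) (a : R) (y : \bar R) : (0 < n)%N ->
  ((n%:R^-1)%:E * ((n%:R * a)%:E + y) = a%:E + (n%:R^-1)%:E * y)%E.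
Proof.
move=> n0; have n0' : (0 : R) < n%:R by rewrite ltr0n.
case: y => [s| |] /=.
- rewrite -EFinD -!EFinM -EFinD; congr EFin.
  by rewrite mulrDr mulrA mulVf ?mul1r // gt_eqF.
- by rewrite gt0_muley ?lte_fin ?invr_gt0.
- by rewrite gt0_muleNy ?lte_fin ?invr_gt0.
Qed.

Lemma limn_esup_le_ev (u v : nat -> \bar R) :
  (forall n, (0 < n)%N -> (u n <= v n)%E) -> (limn_esup u <= limn_esup v)%E.
Proof.
move=> huv; rewrite /limn_esup /limf_esup.
apply: le_ereal_inf_tmp => _ [V hV <-].
apply: ge_ereal_inf; exists (ereal_sup (u @` (V `&` [set n | (0 < n)%N]))).
  exists (V `&` [set n | (0 < n)%N]) => //; apply: filterI => //.
  by exists 1%N => // m /=.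
apply: ge_ereal_sup => _ [m [Vm hm] <-].
by apply: (le_trans (huv m hm)); apply: ereal_sup_ubound; exists m.
Qed.

Lemma limn_esup_shift (a : R) (u : nat -> \bar R) :
  limn_esup (fun n => a%:E + u n)%E = (a%:E + limn_esup u)%E.
Proof.
have h : forall v : nat -> \bar R, limn_esup v = (- limn_einf (\- v))%E.
  move=> v; rewrite /limn_einf oppeK; congr limn_esup.
  by apply/funext => n /=; rewrite oppeK.
rewrite h (h u).
rewrite (_ : \- (fun n => a%:E + u n) = (fun n => (- a)%:E + (\- u) n))%E; last first.
  by apply/funext => n /=; rewrite oppeD.
rewrite limn_einf_shift// oppeD// EFinN oppeK.
by [].
Qed.
End P8.
Section P9.
Context {R : realType} {X : metricType R}.
Implicit Types (x y z c w : X) (r : R).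

Lemma small_cover (d : R) : compact [set: X] -> 0 < d ->
  exists2 U : set (set X), open_cover U &
    forall A, U A -> forall x y, A x -> A y -> mdist x y < d.
Proof.
move=> cX d0.
pose O z := [set y | mdist z y < d / 2].
have d20 : 0 < d / 2 by rewrite divr_gt0.
have hcov : setT `<=` cover setT O.
  by move=> z _; exists z => //; rewrite /O /= mdistxx.
have [Z _ hZ] := @compact_cover' X _ cX X setT O (fun z _ => mball_open z (d/2)) hcov.
exists (O @` [set` Z]).
  split; first by apply: finite_image; exact: finite_fset.
  split; first by move=> A [z _ <-]; exact: mball_open.
  apply/seteqP; split => // w _; have [z zZ Ozw] := hZ w I.
  by exists (O z) => //; exists z.
move=> A [z _ <-] x y /= hx hy.
have t1 := mtri x z y; have t2 := msym x z; rewrite /O /= in hx hy; lra.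
Qed.

Lemma near0r (P : R -> Prop) r : 0 < r ->
  (forall d, 0 < d -> d <= r -> P d) -> \forall d \near 0^'+, P d.
Proof.
move=> r0 h; have h1 := nbhs_right_gt (0 : R).
have h2 := nbhs_right_le r0.
by apply: filterS2 h1 h2 => d; apply: h.
Qed.

Lemma sep_anti (T : X -> X) (f : X -> R) n d1 d2 K : d1 <= d2 ->
  (pressure_sep T f n d2 K <= pressure_sep T f n d1 K)%E.
Proof.
move=> d12; apply: ge_ereal_sup => _ [E [Ef [EK Es]] <-].
apply: ereal_sup_ubound; exists E => //; split => //; split => //.
by move=> x y Ex Ey nxy; apply: le_lt_trans d12 (Es x y Ex Ey nxy).
Qed.
End P9.
Lemma ereal_aux {R : realType} (a c : R) (y : \bar R) :
  (a%:E < c%:E + y)%E -> ((a - c)%:E < y)%E.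
Proof.
case: y => [t| |] //=; rewrite ?lte_fin ?ltey ?addeNy //; move=> h; lra.
Qed.

Lemma fin_between {R : realType} (a b : R) (y : \bar R) :
  (a%:E < y)%E -> (y <= b%:E)%E -> y \is a fin_num.
Proof. by case: y. Qed.

Lemma between_norm {R : realType} (s e : R) (y : \bar R) :
  ((s - e)%:E < y)%E -> (y <= s%:E)%E -> `|s - fine y| < e.
Proof.
case: y => [t| |] //=; rewrite ?lte_fin ?lee_fin => h1 h2.
by rewrite ltr_norml; apply/andP; split; lra.
Qed.

Theorem lemma3p1 (R : realType) (X : metricType R) (T : X -> X) (f : X -> R)
    (K : nat -> set X) :
  compact [set: X] ->
  homeomorphism T ->
  continuous f ->
  (forall n, (0 < n)%N -> K n !=set0 /\ closed (K n)) ->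
  (fun delta : R =>
     limn_esup (fun n => ((n%:R)^-1%:E * elog (pressure_sep T f n delta (K n)))%E))
    x @[x --> 0^'+] -->
  ereal_sup [set limn_esup
                 (fun n => ((n%:R)^-1%:E * elog (pressure_cov T f n U (K n)))%E)
            | U in [set U | open_cover U]].
Proof.
move=> cX [cT _] cf _.
set L := fun delta : R => limn_esup (fun n => ((n%:R)^-1%:E * elog (pressure_sep T f n delta (K n)))%E).
set Lu := fun U => limn_esup (fun n => ((n%:R)^-1%:E * elog (pressure_cov T f n U (K n)))%E).
set S := ereal_sup _.
have scale_le : forall n (a b : \bar R), (a <= b)%E ->
    ((n%:R^-1)%:E * elog a <= (n%:R^-1)%:E * elog b)%E.
  move=> n a b ab; apply: lee_wpmul2l; first by rewrite lee_fin invr_ge0.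
  exact: elog_le.
have hi : forall d, 0 < d -> (L d <= S)%E.
  move=> d d0; have [U Uo Us] := small_cover d cX d0.
  apply: (@le_trans _ _ (Lu U)).
    apply: limn_esup_le_ev => n _; apply: scale_le.
    exact: (sep_le_cov T f n d U (K n) d0 Us).
  by apply: ereal_sup_ubound; exists U.
have hii : forall U, open_cover U -> forall e, 0 < e -> exists2 r, 0 < r &
    forall d, 0 < d -> d <= r -> (Lu U <= e%:E + L d)%E.
  move=> U [Ufin [Uop Ucov]] e e0.
  have [r1 r10 hr1] := lebesgue_num U cX Uop Ucov.
  have [eta eta0 heta] := unif_cont f cX cf e e0.
  have m1 : Order.min r1 eta <= r1 by rewrite ge_min lexx.
  have m2 : Order.min r1 eta <= eta by rewrite ge_min lexx orbT.
  have m0 : 0 < Order.min r1 eta by rewrite lt_min r10 eta0.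
  exists (Order.min r1 eta / 2); first by rewrite divr_gt0.
  move=> d d0 dr.
  set r := Order.min r1 eta / 2.
  have r0 : 0 < r by rewrite divr_gt0.
  have hU' : forall x, exists2 A, U A & [set y | mdist x y < 2 * r] `<=` A.
    move=> x; have [A UA hA] := hr1 x; exists A => // y /= hy; apply: hA => /=.
    rewrite /r in hy; lra.
  have hf' : forall a b, mdist a b < 2 * r -> f b <= f a + e.
    move=> a b hab.
    have h1 : mdist a b < eta by rewrite /r in hab; lra.
    have := heta a b h1; rewrite distrC => h2.
    have := ler_norm (f b - f a); lra.
  apply: (@le_trans _ _ (limn_esup (fun n => e%:E +
      (n%:R^-1)%:E * elog (pressure_sep T f n r (K n))))%E).
    apply: limn_esup_le_ev => n n0.
    rewrite -(scale_shift n e _ n0) -elog_mul; apply: scale_le.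
    exact: cov_le_sep (ltW e0) hU' hf'.
  rewrite limn_esup_shift; apply: leeD2l.
  apply: limn_esup_le_ev => n _; apply: scale_le; exact: sep_anti.
case hS : S => [s| |].
- have claim : forall e, 0 < e ->
      \forall d \near 0^'+, ((s - e)%:E < L d)%E /\ (L d <= s%:E)%E.
    move=> e e0.
    have : ((s - e / 2)%:E < S)%E by rewrite hS lte_fin; lra.
    case/ereal_sup_gt => _ [U Uo <-] hU.
    have e20 : 0 < e / 2 by rewrite divr_gt0.
    have [r r0 hr] := hii U Uo (e / 2) e20.
    apply: (@near0r R (fun d => ((s - e)%:E < L d)%E /\ (L d <= s%:E)%E) r r0) => d d0 dr.
    split; last by rewrite -hS; exact: hi.
    have := lt_le_trans hU (hr d d0 dr) => /ereal_aux.
    by rewrite (_ : s - e / 2 - e / 2 = s - e) //; lra.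
  apply/fine_cvgP; split.
    have := claim 1 ltr01; apply: filterS => d.
    by move=> [h1 h2]; exact: (fin_between _ _ _ h1 h2).
  apply/cvgrPdist_lt => e e0.
  have := claim e e0; apply: filterS => d.
  by move=> [h1 h2]; exact: (between_norm _ _ _ h1 h2).
- apply/cvgeyPge => A.
  have : ((A + 1)%:E < S)%E by rewrite hS ltey.
  case/ereal_sup_gt => _ [U Uo <-] hU.
  have [r r0 hr] := hii U Uo 1 ltr01.
  apply: (@near0r R (fun d => (A%:E <= L d)%E) r r0) => d d0 dr.
  have := lt_le_trans hU (hr d d0 dr) => /ereal_aux.
  rewrite addrK => /ltW //.
- apply/cvgeNyPle => A.
  apply: (@near0r R (fun d => (L d <= A%:E)%E) 1 ltr01) => d d0 _.
  by have := hi d d0; rewrite hS => h; apply: le_trans h (leNye _).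
Qed.
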